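(* Let $(S,C,T,\mathbf{p},\mathbf{c})$ be a DFEP instance, let $\rho>0$, let $D_E$ be a decision tree for it with expected testing cost $E=cost_E(D_E)$ and let $D_W$ be a decision tree for it with worst testing cost $W=cost_W(D_W)$. Let $D$ be the tree returned by \texttt{CombineTrees}$(D_E,D_W,\rho)$. Then $cost_E(D)\le (1+1/\rho)E$ and $cost_W(D)\le (1+\rho)W$.
   Context: A DFEP instance $(S,C,T,\mathbf{p},\mathbf{c})$: $S$ a finite set of objects partitioned into classes $C$; $T$ a complete set of tests $t:S\to\{1,\dots,\ell\}$ (any two distinct objects are distinguished by some test); $\mathbf p$ a probability distribution on $S$; each test $t$ has a cost $c(t)\in\mathbb{Q}^+$. A decision tree is a leaf labeled with a class if all objects in the current set belong to that class; otherwise its root is labeled with a test $t$ and its children are decision trees for the nonempty sets $\{s: t(s)=i\}$ within the current set. $cost(D,s)$ is the sum of the costs of the tests on the root-to-leaf path of object $s$; $cost_W(D)=\max_{s} cost(D,s)$ and $cost_E(D)=\sum_s cost(D,s)p(s)$. Procedure \texttt{CombineTrees}$(D_E,D_W,\rho)$: (1) call a node $v$ of $D_E$ replaceable if the total cost of the path from the root of $D_E$ to $v$ (including $v$) is at least $\rho W$ while the cost of the path from the root of $D_E$ to the parent of $v$ is smaller than $\rho W$; let $R$ be the set of replaceable nodes. (2) For each $v\in R$, let $S(v)$ be the set of objects associated with leaves of the subtree of $D_E$ rooted at $v$, let $D_W^{S(v)}$ be the decision tree for $S(v)$ obtained from $D_W$ by disassociating every object of $S\setminus S(v)$ from it, and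 replace the subtree of $D_E$ rooted at $v$ by $D_W^{S(v)}$. (3) Return the resulting tree $D$. *)

(* Defs.v *)
From HB Require Import structures.
From mathcomp Require Import all_boot all_order all_algebra.
Set Implicit Arguments. Unset Strict Implicit. Unset Printing Implicit Defensive.
Import Order.TTheory GRing.Theory Num.Theory.
Local Open Scope ring_scope.

(* A decision tree: a leaf labelled by a class, or an internal node labelled
   by a test, with one child per test outcome (children for outcomes that no
   object of the current set takes are irrelevant). *)
Inductive dtree (Tst V K : Type) : Type :=
| Leaf of K
| Node of Tst & (V -> dtree Tst V K).
Arguments Leaf {Tst V K} _.
Arguments Node {Tst V K} _ _.

Section DFEP.
Variables (R : realFieldType) (S : finType) (K : eqType) (Tst : finType)
  (l : nat) (test : Tst -> S -> 'I_l) (cls : S -> K) (p : S -> R)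
  (c : Tst -> rat).

Local Notation tree := (dtree Tst 'I_l K).

Definition branch (X : {set S}) (t : Tst) (i : 'I_l) : {set S} :=
  X :&: [set s | test t s == i].

Fixpoint is_dtree (X : {set S}) (D : tree) : Prop :=
  match D with
  | Leaf k => forall s, s \in X -> cls s = k
  | Node t ch =>
      ~ (exists k, forall s, s \in X -> cls s = k) /\
      forall i, (exists s, s \in branch X t i) -> is_dtree (branch X t i) (ch i)
  end.

Fixpoint cost (D : tree) (s : S) : R :=
  match D with
  | Leaf _ => 0
  | Node t ch => ratr (c t) + cost (ch (test t s)) s
  end.

Definition costW (D : tree) : R := \big[Num.max/0]_(s : S) cost D s.
Definition costE (D : tree) : R := \sum_(s : S) p s * cost D s.

(* D^X: the decision tree for X obtained from D by disassociating the objects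
   outside X; nodes whose remaining (nonempty) object set is single-class
   become leaves of that class. *)
Fixpoint restrict (X : {set S}) (D : tree) : tree :=
  match D with
  | Leaf k => Leaf k
  | Node t ch =>
      match [pick s in X] with
      | Some s0 =>
          if [forall s in X, cls s == cls s0] then Leaf (cls s0)
          else Node t (fun i => restrict (branch X t i) (ch i))
      | None => D
      end
  end.

(* Traverse D_E; acc = cost of the path from the root to the parent of the
   current node, X = objects reaching the current node (= S(v)).  A node v is
   replaceable iff acc < thr <= acc + c(test at v); it is then replaced by
   D_W^{S(v)}. *)
Fixpoint combine_aux (DW : tree) (thr acc : R) (X : {set S}) (D : tree) : tree :=
  match D with
  | Leaf k => Leaf k
  | Node t ch =>
      if (acc < thr) && (thr <= acc + ratr (c t)) then restrict X DW
      else Node t (fun i => combine_aux DW thr (acc + ratr (c t)) (branch X t i) (ch i))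
  end.

Definition combine_trees (DE DW : tree) (rho : R) : tree :=
  combine_aux DW (rho * costW DW) 0 [set: S] DE.

End DFEP.

(* Main.v *)
Require Import Defs.
From HB Require Import structures.
From mathcomp Require Import all_boot all_order all_algebra.
From mathcomp Require Import lra.
Import Order.TTheory GRing.Theory Num.Theory.
Local Open Scope ring_scope.

Section Helpers.
Variables (R : realFieldType) (S : finType) (K : eqType) (Tst : finType)
  (l : nat) (test : Tst -> S -> 'I_l) (cls : S -> K) (c : Tst -> rat).
Hypothesis c_pos : forall t, 0 < c t.

Lemma ratr_pos t : 0 < (ratr (c t) : R).
Proof. by rewrite ltr0q. Qed.

Lemma cost_ge0 (D : dtree Tst (ordinal l) K) s : 0 <= cost R test c D s.
Proof.
elim: D => [k|t ch IH] //=.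
by rewrite addr_ge0 // ltW // ratr_pos.
Qed.

Lemma in_branch (X : {set S}) t s : s \in X -> s \in branch test X t (test t s).
Proof. by move=> sX; rewrite /branch !inE sX eqxx. Qed.

Lemma cost_restrict (DW : dtree Tst (ordinal l) K) (X : {set S}) s : s \in X ->
  cost R test c (restrict test cls X DW) s <= cost R test c DW s.
Proof.
elim: DW X => [k|t ch IH] X sX //=.
case: pickP => [s0 Hs0|] //.
case: ifP => _ /=; first by rewrite addr_ge0 ?cost_ge0 // ltW // ratr_pos.
by rewrite lerD2l; apply: IH; apply: in_branch.
Qed.

Lemma comb_main (rho W : R) (DW D : dtree Tst (ordinal l) K) (acc : R) (X : {set S}) s : s \in X -> 0 <= acc -> acc < rho * W ->
  0 < rho ->
  (forall Y : {set S}, s \in Y -> cost R test c (restrict test cls Y DW) s <= W) ->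
  acc + cost R test c (combine_aux test cls c DW (rho * W) acc X D) s
     <= (1 + 1 / rho) * (acc + cost R test c D s) /\
  acc + cost R test c (combine_aux test cls c DW (rho * W) acc X D) s
     <= rho * W + W.
Proof.
move=> + + + rp HW.
have W0 : 0 <= W.
  by apply: le_trans (HW [set: S] _); rewrite ?cost_ge0 ?inE.
have r0 : 0 < 1 / rho by rewrite divr_gt0.
elim: D acc X => [k|t ch IH] acc X sX acc0 accl /=.
  rewrite !addr0; split; last by lra.
  set r := 1 / rho in r0 *; nra.
case: ifP => [/andP [_ le] | Hn].
  have hc := HW X sX.
  have hct := ratr_pos t.
  have hcs := cost_ge0 (ch (test t s)) s.
  have hA : W <= 1 / rho * (acc + (ratr (c t) + cost R test c (ch (test t s)) s)).
    rewrite mul1r mulrC ler_pdivlMr // mulrC.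
    by apply: le_trans le _; lra.
  split; last by lra.
  move: hA; set r := 1 / rho => hA.
  set A := acc + _ in hA *; set B := cost _ _ _ _ _ in hc *.
  have hA0 : acc <= A by rewrite /A; lra.
  nra.
move: Hn; rewrite accl /= => /negbT; rewrite -ltNge => Hlt.
have := IH (test t s) (acc + ratr (c t)) (branch test X t (test t s))
  (@in_branch X t s sX).
have hct := ratr_pos t.
case=> //; first by lra.
by move=> h1 h2; rewrite !addrA; split.
Qed.

End Helpers.

Theorem theorem2 (R : realFieldType) (S : finType) (K : eqType) (Tst : finType)
  (l : nat) (test : Tst -> S -> 'I_l) (cls : S -> K) (p : S -> R)
  (c : Tst -> rat)
  (complete : forall s1 s2 : S, s1 != s2 -> exists t, test t s1 != test t s2)
  (p_ge0 : forall s, 0 <= p s) (p_sum1 : \sum_(s : S) p s = 1)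
  (c_pos : forall t, 0 < c t)
  (rho : R) (rho_pos : 0 < rho)
  (DE DW : dtree Tst 'I_l K)
  (hDE : is_dtree test cls [set: S] DE) (hDW : is_dtree test cls [set: S] DW) :
  let E := costE test p c DE in
  let W : R := costW R test c DW in
  let D := combine_trees test cls c DE DW rho in
  costE test p c D <= (1 + 1 / rho) * E /\ costW R test c D <= (1 + rho) * W.
Proof.
move=> E W D.
have Wge s : cost R test c DW s <= W.
  rewrite /W /costW (bigD1 s) //= le_max lexx //.
have W0 : 0 <= W.
  rewrite /W /costW; apply: (big_ind (fun x => 0 <= x)) => //.
  - by move=> x y hx hy; rewrite le_max hx.
  - by move=> i _; exact: (@cost_ge0 R S K Tst l test c c_pos).
have r0 : 0 < 1 / rho by rewrite divr_gt0.
suff pw : forall s, cost R test c D s <= (1 + 1 / rho) * cost R test c DE s /\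
                    cost R test c D s <= (1 + rho) * W.
  split.
    rewrite /costE /E /costE mulr_sumr; apply: ler_sum => s _.
    rewrite mulrCA; apply: ler_wpM2l => //; exact: (pw s).1.
  rewrite /costW; apply: (big_ind (fun x => x <= (1 + rho) * W)).
  - by rewrite mulr_ge0 // addr_ge0 // ltW.
  - by move=> x y hx hy; rewrite ge_max hx hy.
  - by move=> s _; exact: (pw s).2.
move=> s.
have [Wz|Wp] := eqVneq W 0.
  have [k Hk] : exists k, forall s', cls s' = k.
    case EW: DW => [k|t ch].
      by exists k => s'; move: hDW; rewrite EW /= => h; apply: h; rewrite inE.
    exfalso; have := Wge s; rewrite EW /= Wz => h.
    have := @cost_ge0 R S K Tst l test c c_pos (ch (test t s)) s.
    have := @ratr_pos R Tst c c_pos t; lra.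
  case E2: DE => [k'|t' ch'].
    by rewrite /D /combine_trees E2 /= Wz !mulr0 lexx.
  by move: hDE; rewrite E2 /= => -[h _]; exfalso; apply: h; exists k.
have Wp' : 0 < W by rewrite lt0r Wp.
have HW : forall Y : {set S}, s \in Y ->
    cost R test c (restrict test cls Y DW) s <= W.
  move=> Y sY; apply: le_trans (@cost_restrict R S K Tst l test cls c c_pos DW Y s sY) _.
  exact: Wge.
have := @comb_main R S K Tst l test cls c c_pos rho W DW DE 0 [set: S] s
  (in_setT s) (lexx 0) (mulr_gt0 rho_pos Wp') rho_pos HW.
move=> [h1 h2]; rewrite !add0r in h1 h2; split.
  exact: h1.
by rewrite mulrDl mul1r addrC.
Qed.
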